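(* For every finite multiset $\Gamma$ and formulas $\varphi,\chi$: if $\varphi,\varphi,\Gamma\Rightarrow\chi$ is provable in $\mathsf{G4iSLt}$, then $\varphi,\Gamma\Rightarrow\chi$ is provable in $\mathsf{G4iSLt}$.
   Context: Formulas are built by the grammar $\varphi ::= p \mid \bot \mid \varphi\land\varphi \mid \varphi\lor\varphi \mid \varphi\to\varphi \mid \Box\varphi$, with $p$ ranging over a countably infinite set of propositional variables. For a multiset $\Gamma$, $\Box\Gamma=\{\Box\psi:\psi\in\Gamma\}$; a boxed formula is one of the form $\Box\psi$. A sequent is $\Gamma\Rightarrow\chi$ with $\Gamma$ a finite multiset of formulas and $\chi$ a formula. The sequent calculus $\mathsf{G4iSLt}$ has the following rules, where $p$ is a propositional variable and $\Phi$ always denotes a multiset containing no boxed formula: (⊥L) $\bot,\Gamma\Rightarrow\chi$ (no premise); (IdP) $\Gamma,p\Rightarrow p$ (no premise); (∧L) from $\Gamma,\varphi,\psi\Rightarrow\chi$ infer $\Gamma,\varphi\land\psi\Rightarrow\chi$; (∧R) from $\Gamma\Rightarrow\varphi$ and $\Gamma\Rightarrow\psi$ infer $\Gamma\Rightarrow\varphi\land\psi$; (∨L) from $\Gamma,\varphi\Rightarrow\chi$ and $\Gamma,\psi\Rightarrow\chi$ infer $\Gamma,\varphi\lor\psi\Rightarrow\chi$; (∨R$_i$), $i\in\{1,2\}$: from $\Gamma\Rightarrow\varphi_i$ infer $\Gamma\Rightarrow\varphi_1\lor\varphi_2$; (p→L) from $\Gamma,p,\varphi\Rightarrow\chi$ infer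 $\Gamma,p,p\to\varphi\Rightarrow\chi$; (→R) from $\Gamma,\varphi\Rightarrow\psi$ infer $\Gamma\Rightarrow\varphi\to\psi$; (□→L) from $\Phi,\Gamma,\psi,\Box\varphi\Rightarrow\varphi$ and $\Phi,\Box\Gamma,\psi\Rightarrow\chi$ infer $\Phi,\Box\Gamma,\Box\varphi\to\psi\Rightarrow\chi$; (SLtR) from $\Phi,\Gamma,\Box\varphi\Rightarrow\varphi$ infer $\Phi,\Box\Gamma\Rightarrow\Box\varphi$; (∧→L) from $\Gamma,\varphi\to(\psi\to\chi)\Rightarrow\delta$ infer $\Gamma,(\varphi\land\psi)\to\chi\Rightarrow\delta$; (∨→L) from $\Gamma,\varphi\to\chi,\psi\to\chi\Rightarrow\delta$ infer $\Gamma,(\varphi\lor\psi)\to\chi\Rightarrow\delta$; (→→L) from $\Gamma,\psi\to\chi\Rightarrow\varphi\to\psi$ and $\Gamma,\chi\Rightarrow\delta$ infer $\Gamma,(\varphi\to\psi)\to\chi\Rightarrow\delta$. A proof of a sequent $S$ is a finite tree of sequents with root $S$ in which each interior node together with its children forms an instance of a rule (conclusion, premises) and each leaf is the conclusion of a premise-free rule; $S$ is provable if it has a proof. *)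

(* Defs.v *)
From Stdlib Require Import List Permutation.
Import ListNotations.

Inductive form : Type :=
| Var : nat -> form
| Bot : form
| And : form -> form -> form
| Or  : form -> form -> form
| Imp : form -> form -> form
| Box : form -> form.

Definition boxed (f : form) : Prop :=
  match f with Box _ => True | _ => False end.

Definition noBox (Phi : list form) : Prop := Forall (fun f => ~ boxed f) Phi.

Definition boxes (G : list form) : list form := map Box G.

(* Provability in G4iSLt.  A finite multiset is represented by a list;
   each rule's conclusion is matched up to permutation (i.e. as a multiset). *)
Inductive G4iSLt : list form -> form -> Prop :=
| BotL G G0 c :
    Permutation G (Bot :: G0) -> G4iSLt G c
| IdP G G0 p :
    Permutation G (Var p :: G0) -> G4iSLt G (Var p)
| AndL G G0 a b c :
    Permutation G (And a b :: G0) -> G4iSLt (a :: b :: G0) c -> G4iSLt G c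
| AndR G a b :
    G4iSLt G a -> G4iSLt G b -> G4iSLt G (And a b)
| OrL G G0 a b c :
    Permutation G (Or a b :: G0) -> G4iSLt (a :: G0) c -> G4iSLt (b :: G0) c ->
    G4iSLt G c
| OrR1 G a b : G4iSLt G a -> G4iSLt G (Or a b)
| OrR2 G a b : G4iSLt G b -> G4iSLt G (Or a b)
| PImpL G G0 p a c :
    Permutation G (Var p :: Imp (Var p) a :: G0) ->
    G4iSLt (Var p :: a :: G0) c -> G4iSLt G c
| ImpR G a b : G4iSLt (a :: G) b -> G4iSLt G (Imp a b)
| BoxImpL G Phi Gam a b c :
    noBox Phi ->
    Permutation G (Phi ++ boxes Gam ++ [Imp (Box a) b]) ->
    G4iSLt (Phi ++ Gam ++ [b; Box a]) a ->
    G4iSLt (Phi ++ boxes Gam ++ [b]) c ->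
    G4iSLt G c
| SLtR G Phi Gam a :
    noBox Phi ->
    Permutation G (Phi ++ boxes Gam) ->
    G4iSLt (Phi ++ Gam ++ [Box a]) a ->
    G4iSLt G (Box a)
| AndImpL G G0 a b c d :
    Permutation G (Imp (And a b) c :: G0) ->
    G4iSLt (Imp a (Imp b c) :: G0) d -> G4iSLt G d
| OrImpL G G0 a b c d :
    Permutation G (Imp (Or a b) c :: G0) ->
    G4iSLt (Imp a c :: Imp b c :: G0) d -> G4iSLt G d
| ImpImpL G G0 a b c d :
    Permutation G (Imp (Imp a b) c :: G0) ->
    G4iSLt (Imp b c :: G0) (Imp a b) -> G4iSLt (c :: G0) d -> G4iSLt G d.

(* Main.v *)
Require Import Defs.
From Stdlib Require Import List Permutation Lia Arith.
Import ListNotations.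

Definition unbox (f : form) : form := match f with Box a => a | _ => f end.

Inductive D : nat -> list form -> form -> Prop :=
| DBot n G c : In Bot G -> D (S n) G c
| DId n G p : In (Var p) G -> D (S n) G (Var p)
| DAndL n G G0 a b c : Permutation G (And a b :: G0) -> D n (a :: b :: G0) c -> D (S n) G c
| DAndR n G a b : D n G a -> D n G b -> D (S n) G (And a b)
| DOrL n G G0 a b c : Permutation G (Or a b :: G0) -> D n (a :: G0) c -> D n (b :: G0) c -> D (S n) G c
| DOrR1 n G a b : D n G a -> D (S n) G (Or a b)
| DOrR2 n G a b : D n G b -> D (S n) G (Or a b)
| DPImpL n G G0 p a c : Permutation G (Var p :: Imp (Var p) a :: G0) -> D n (Var p :: a :: G0) c -> D (S n) G c
| DImpR n G a b : D n (a :: G) b -> D (S n) G (Imp a b)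
| DBoxImpL n G G0 a b c : Permutation G (Imp (Box a) b :: G0) ->
    D n (b :: Box a :: map unbox G0) a -> D n (b :: G0) c -> D (S n) G c
| DSLtR n G a : D n (Box a :: map unbox G) a -> D (S n) G (Box a)
| DAndImpL n G G0 a b c d : Permutation G (Imp (And a b) c :: G0) -> D n (Imp a (Imp b c) :: G0) d -> D (S n) G d
| DOrImpL n G G0 a b c d : Permutation G (Imp (Or a b) c :: G0) -> D n (Imp a c :: Imp b c :: G0) d -> D (S n) G d
| DImpImpL n G G0 a b c d : Permutation G (Imp (Imp a b) c :: G0) ->
    D n (Imp b c :: G0) (Imp a b) -> D n (c :: G0) d -> D (S n) G d.

Definition form_eq_dec : forall x y : form, {x = y} + {x <> y}.
Proof. decide equality; apply Nat.eq_dec. Defined.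

Definition feq (x y : form) : nat := if form_eq_dec x y then 1 else 0.
Fixpoint cnt (x : form) (l : list form) : nat :=
  match l with [] => 0 | y :: l' => feq y x + cnt x l' end.

Lemma cnt_app x l1 l2 : cnt x (l1 ++ l2) = cnt x l1 + cnt x l2.
Proof. induction l1; simpl; lia. Qed.

Lemma cnt_count x l : cnt x l = count_occ form_eq_dec l x.
Proof. induction l; simpl; auto. unfold feq. destruct (form_eq_dec a x); lia. Qed.

Lemma perm_cnt l1 l2 : Permutation l1 l2 -> forall x, cnt x l1 = cnt x l2.
Proof. intros H x. rewrite !cnt_count. apply Permutation_count_occ; auto. Qed.

Lemma cnt_perm l1 l2 : (forall x, cnt x l1 = cnt x l2) -> Permutation l1 l2.
Proof. intros H. apply (Permutation_count_occ form_eq_dec). intro x. rewrite <- !cnt_count; auto. Qed.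

Ltac psolve :=
  apply cnt_perm; let x := fresh "x" in intro x;
  repeat match goal with H : Permutation _ _ |- _ => pose proof (perm_cnt _ _ H x); clear H end;
  repeat match goal with
  | |- context [map ?f (?a ++ ?b)] => rewrite (map_app f a b)
  | H : context [map ?f (?a ++ ?b)] |- _ => rewrite (map_app f a b) in H
  | |- context [cnt ?x (?a ++ ?b)] => rewrite (cnt_app x a b)
  | H : context [cnt ?x (?a ++ ?b)] |- _ => rewrite (cnt_app x a b) in H
  end; simpl in *;
  repeat match goal with
  | |- context [cnt ?x (?a ++ ?b)] => rewrite (cnt_app x a b)
  | H : context [cnt ?x (?a ++ ?b)] |- _ => rewrite (cnt_app x a b) in H
  end; lia.

Lemma test (a b : form) l1 l2 (H : Permutation l1 (a :: l2)) : Permutation (b :: l1) (a :: b :: l2).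
Proof. psolve. Qed.

Lemma perm_map_unbox l1 l2 : Permutation l1 l2 -> Permutation (map unbox l1) (map unbox l2).
Proof. apply Permutation_map. Qed.

Lemma D_perm n G c : D n G c -> forall G', Permutation G G' -> D n G' c.
Proof.
  induction 1; intros G' HP.
  - apply DBot. eapply Permutation_in; eauto.
  - apply DId. eapply Permutation_in; eauto.
  - eapply DAndL; [eapply Permutation_trans; [apply Permutation_sym; exact HP| eassumption] |..]; eassumption.
  - apply DAndR; auto.
  - eapply DOrL; [eapply Permutation_trans; [apply Permutation_sym; exact HP| eassumption] |..]; eassumption.
  - apply DOrR1; auto.
  - apply DOrR2; auto.
  - eapply DPImpL; [eapply Permutation_trans; [apply Permutation_sym; exact HP| eassumption] |..]; eassumption.
  - apply DImpR. apply IHD. auto.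
  - eapply DBoxImpL; [eapply Permutation_trans; [apply Permutation_sym; exact HP| eassumption] |..]; eassumption.
  - apply DSLtR. apply IHD. apply perm_skip. apply perm_map_unbox; auto.
  - eapply DAndImpL; [eapply Permutation_trans; [apply Permutation_sym; exact HP| eassumption] |..]; eassumption.
  - eapply DOrImpL; [eapply Permutation_trans; [apply Permutation_sym; exact HP| eassumption] |..]; eassumption.
  - eapply DImpImpL; [eapply Permutation_trans; [apply Permutation_sym; exact HP| eassumption] |..]; eassumption.
Qed.

Lemma D_mono n G c : D n G c -> forall m, n <= m -> D m G c.
Proof.
  induction 1; intros m Hm; destruct m as [|m]; try lia; assert (n <= m) by lia.
  - apply DBot; auto.
  - apply DId; auto.
  - eapply DAndL; eauto.
  - apply DAndR; auto.
  - eapply DOrL; eauto.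
  - apply DOrR1; auto.
  - apply DOrR2; auto.
  - eapply DPImpL; eauto.
  - apply DImpR; auto.
  - eapply DBoxImpL; eauto.
  - apply DSLtR; auto.
  - eapply DAndImpL; eauto.
  - eapply DOrImpL; eauto.
  - eapply DImpImpL; eauto.
Qed.

Inductive Prov (G : list form) (c : form) : Prop := prov_intro (n : nat) : D n G c -> Prov G c.

Lemma Prov_perm G c G' : Prov G c -> Permutation G G' -> Prov G' c.
Proof. intros [n H] HP. exists n. eapply D_perm; eauto. Qed.

Ltac pmax H1 H2 := 
  let n1 := match type of H1 with D ?n _ _ => n end in
  let n2 := match type of H2 with D ?n _ _ => n end in
  let K1 := fresh in let K2 := fresh in
  pose proof (D_mono _ _ _ H1 (Nat.max n1 n2) ltac:(lia)) as K1;
  pose proof (D_mono _ _ _ H2 (Nat.max n1 n2) ltac:(lia)) as K2; clear H1 H2.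
Lemma PBot G c : In Bot G -> Prov G c.
Proof. intros; exists 1; apply DBot; auto. Qed.
Lemma PId G p : In (Var p) G -> Prov G (Var p).
Proof. intros; exists 1; apply DId; auto. Qed.
Lemma PAndL G G0 a b c : Permutation G (And a b :: G0) -> Prov (a :: b :: G0) c -> Prov G c.
Proof. intros H [n H1]; exists (S n); eapply DAndL; eauto. Qed.
Lemma PAndR G a b : Prov G a -> Prov G b -> Prov G (And a b).
Proof. intros [n1 H1] [n2 H2]; pmax H1 H2; eexists; apply DAndR; eauto. Qed.
Lemma POrL G G0 a b c : Permutation G (Or a b :: G0) -> Prov (a :: G0) c -> Prov (b :: G0) c -> Prov G c.
Proof. intros H [n1 H1] [n2 H2]; pmax H1 H2; eexists; eapply DOrL; eauto. Qed.
Lemma POrR1 G a b : Prov G a -> Prov G (Or a b).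
Proof. intros [n H1]; exists (S n); apply DOrR1; auto. Qed.
Lemma POrR2 G a b : Prov G b -> Prov G (Or a b).
Proof. intros [n H1]; exists (S n); apply DOrR2; auto. Qed.
Lemma PPImpL G G0 p a c : Permutation G (Var p :: Imp (Var p) a :: G0) -> Prov (Var p :: a :: G0) c -> Prov G c.
Proof. intros H [n H1]; exists (S n); eapply DPImpL; eauto. Qed.
Lemma PImpR G a b : Prov (a :: G) b -> Prov G (Imp a b).
Proof. intros [n H1]; exists (S n); apply DImpR; auto. Qed.
Lemma PBoxImpL G G0 a b c : Permutation G (Imp (Box a) b :: G0) ->
    Prov (b :: Box a :: map unbox G0) a -> Prov (b :: G0) c -> Prov G c.
Proof. intros H [n1 H1] [n2 H2]; pmax H1 H2; eexists; eapply DBoxImpL; eauto. Qed.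
Lemma PSLtR G a : Prov (Box a :: map unbox G) a -> Prov G (Box a).
Proof. intros [n H1]; exists (S n); apply DSLtR; auto. Qed.
Lemma PAndImpL G G0 a b c d : Permutation G (Imp (And a b) c :: G0) -> Prov (Imp a (Imp b c) :: G0) d -> Prov G d.
Proof. intros H [n H1]; exists (S n); eapply DAndImpL; eauto. Qed.
Lemma POrImpL G G0 a b c d : Permutation G (Imp (Or a b) c :: G0) -> Prov (Imp a c :: Imp b c :: G0) d -> Prov G d.
Proof. intros H [n H1]; exists (S n); eapply DOrImpL; eauto. Qed.
Lemma PImpImpL G G0 a b c d : Permutation G (Imp (Imp a b) c :: G0) ->
    Prov (Imp b c :: G0) (Imp a b) -> Prov (c :: G0) d -> Prov G d.
Proof. intros H [n1 H1] [n2 H2]; pmax H1 H2; eexists; eapply DImpImpL; eauto. Qed.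

Lemma map_unbox_boxes Gam : map unbox (boxes Gam) = Gam.
Proof. induction Gam; simpl; f_equal; auto. Qed.
Lemma map_unbox_noBox Phi : noBox Phi -> map unbox Phi = Phi.
Proof. induction 1; simpl; auto. f_equal; auto. destruct x; simpl; auto. exfalso; apply H; exact I. Qed.

Lemma G4_D G c : G4iSLt G c -> Prov G c.
Proof.
  induction 1.
  - apply PBot. eapply Permutation_in; [apply Permutation_sym; eauto| left; auto].
  - apply PId. eapply Permutation_in; [apply Permutation_sym; eauto| left; auto].
  - eapply PAndL; eauto.
  - apply PAndR; auto.
  - eapply POrL; eauto.
  - apply POrR1; auto.
  - apply POrR2; auto.
  - eapply PPImpL; eauto.
  - apply PImpR; auto.
  - eapply PBoxImpL with (G0 := Phi ++ boxes Gam) (a := a) (b := b).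
    + psolve.
    + eapply Prov_perm; [eauto|]. rewrite map_app, map_unbox_boxes, (map_unbox_noBox Phi); auto. psolve.
    + eapply Prov_perm; [eauto|]. psolve.
  - apply PSLtR. eapply Prov_perm; [eauto|].
    apply perm_map_unbox in H0. rewrite map_app, map_unbox_boxes, (map_unbox_noBox Phi) in H0; auto. psolve.
  - eapply PAndImpL; eauto.
  - eapply POrImpL; eauto.
  - eapply PImpImpL; eauto.
Qed.

Fixpoint phiof (l : list form) : list form :=
  match l with [] => [] | Box _ :: l' => phiof l' | x :: l' => x :: phiof l' end.
Fixpoint gamof (l : list form) : list form :=
  match l with [] => [] | Box a :: l' => a :: gamof l' | _ :: l' => gamof l' end.

Lemma split_spec l : noBox (phiof l) /\ Permutation l (phiof l ++ boxes (gamof l)) /\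
   Permutation (map unbox l) (phiof l ++ gamof l).
Proof.
  induction l as [|x l IH]; simpl. { repeat split; auto. constructor. }
  destruct IH as [H1 [H2 H3]].
  destruct x; simpl; repeat split; try (constructor; [simpl; tauto|auto]); try (apply perm_skip; auto);
  try apply H1; unfold boxes in *; simpl; try psolve.
Qed.

Lemma in_perm (x : form) l : In x l -> exists l', Permutation l (x :: l').
Proof. intros H. apply in_split in H as [l1 [l2 ->]]. exists (l1 ++ l2). apply Permutation_sym, Permutation_middle. Qed.

Lemma D_G4 n : forall G c, D n G c -> G4iSLt G c.
Proof.
  induction n; intros G c H; inversion H; subst.
  - apply in_perm in H1 as [l' Hl]. eapply BotL; eauto.
  - apply in_perm in H1 as [l' Hl]. eapply IdP; eauto.
  - eapply AndL; eauto.
  - apply AndR; auto.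
  - eapply OrL; eauto.
  - apply OrR1; auto.
  - apply OrR2; auto.
  - eapply PImpL; eauto.
  - apply ImpR; auto.
  - match goal with HH : Permutation G (Imp (Box ?a) ?b :: ?G0) |- _ => 
      destruct (split_spec G0) as [S1 [S2 S3]];
    eapply BoxImpL with (Phi := phiof G0) (Gam := gamof G0) (a := a) (b := b); auto end.
    + psolve.
    + apply IHn. eapply D_perm; eauto. psolve.
    + apply IHn. eapply D_perm; eauto. psolve.
  - destruct (split_spec G) as [S1 [S2 S3]].
    eapply SLtR with (Phi := phiof G) (Gam := gamof G); auto.
    apply IHn. eapply D_perm; eauto. psolve.
  - eapply AndImpL; eauto.
  - eapply OrImpL; eauto.
  - eapply ImpImpL; eauto.
Qed.
Lemma D_weak n G c : D n G c -> forall x, D n (x :: G) c.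
Proof.
  induction 1; intro x.
  - apply DBot; right; auto.
  - apply DId; right; auto.
  - eapply DAndL with (G0 := x :: G0) (a:=a) (b:=b); [psolve|]. eapply D_perm; [apply (IHD x)|psolve].
  - apply DAndR; auto.
  - eapply DOrL with (G0 := x :: G0) (a:=a) (b:=b); [psolve| |].
    + eapply D_perm; [apply (IHD1 x)|psolve].
    + eapply D_perm; [apply (IHD2 x)|psolve].
  - apply DOrR1; auto.
  - apply DOrR2; auto.
  - eapply DPImpL with (G0 := x :: G0) (p:=p) (a:=a); [psolve|]. eapply D_perm; [apply (IHD x)|psolve].
  - apply DImpR. eapply D_perm; [apply (IHD x)|psolve].
  - eapply DBoxImpL with (G0 := x :: G0) (a:=a) (b:=b); [psolve| |].
    + eapply D_perm; [apply (IHD1 (unbox x))|simpl; psolve].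
    + eapply D_perm; [apply (IHD2 x)|psolve].
  - apply DSLtR. eapply D_perm; [apply (IHD (unbox x))|simpl; psolve].
  - eapply DAndImpL with (G0 := x :: G0) (a:=a) (b:=b) (c:=c); [psolve|]. eapply D_perm; [apply (IHD x)|psolve].
  - eapply DOrImpL with (G0 := x :: G0) (a:=a) (b:=b) (c:=c); [psolve|]. eapply D_perm; [apply (IHD x)|psolve].
  - eapply DImpImpL with (G0 := x :: G0) (a:=a) (b:=b) (c:=c); [psolve| |].
    + eapply D_perm; [apply (IHD1 x)|psolve].
    + eapply D_perm; [apply (IHD2 x)|psolve].
Qed.

Lemma Prov_weak G c x : Prov G c -> Prov (x :: G) c.
Proof. intros [n H]; exists n; apply D_weak; auto. Qed.

Lemma D_weak_app n G c : D n G c -> forall l, D n (l ++ G) c.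
Proof. intros H l; induction l; simpl; auto. apply D_weak; auto. Qed.

Lemma D_ImpR_inv n G c : D n G c -> forall a b, c = Imp a b -> D n (a :: G) b.
Proof.
  induction 1; intros a0 b0 Hc; try discriminate.
  - apply DBot; right; auto.
  - eapply DAndL with (G0 := a0 :: G0) (a:=a) (b:=b); [psolve|]. eapply D_perm; [apply (IHD a0 b0 Hc)|psolve].
  - eapply DOrL with (G0 := a0 :: G0) (a:=a) (b:=b); [psolve| |].
    + eapply D_perm; [apply (IHD1 a0 b0 Hc)|psolve].
    + eapply D_perm; [apply (IHD2 a0 b0 Hc)|psolve].
  - eapply DPImpL with (G0 := a0 :: G0) (p:=p) (a:=a); [psolve|]. eapply D_perm; [apply (IHD a0 b0 Hc)|psolve].
  - injection Hc; intros; subst. eapply D_mono; eauto.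
  - eapply DBoxImpL with (G0 := a0 :: G0) (a:=a) (b:=b); [psolve| |].
    + eapply D_perm; [apply (D_weak _ _ _ H0 (unbox a0))|simpl; psolve].
    + eapply D_perm; [apply (IHD2 a0 b0 Hc)|psolve].
  - eapply DAndImpL with (G0 := a0 :: G0) (a:=a) (b:=b) (c:=c); [psolve|]. eapply D_perm; [apply (IHD a0 b0 Hc)|psolve].
  - eapply DOrImpL with (G0 := a0 :: G0) (a:=a) (b:=b) (c:=c); [psolve|]. eapply D_perm; [apply (IHD a0 b0 Hc)|psolve].
  - eapply DImpImpL with (G0 := a0 :: G0) (a:=a) (b:=b) (c:=c); [psolve| |].
    + eapply D_perm; [apply (D_weak _ _ _ H0 a0)|psolve].
    + eapply D_perm; [apply (IHD2 a0 b0 Hc)|psolve].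
Qed.

Lemma Prov_ImpR_inv G a b : Prov G (Imp a b) -> Prov (a :: G) b.
Proof. intros [n H]; exists n; eapply D_ImpR_inv; eauto. Qed.

Lemma perm_cons_split (x y : form) l l' : Permutation (x :: l) (y :: l') ->
  (x = y /\ Permutation l l') \/ (exists l'', Permutation l (y :: l'') /\ Permutation l' (x :: l'')).
Proof.
  intros H. destruct (form_eq_dec x y) as [<-|Hne].
  - left; split; auto. eapply Permutation_cons_inv; eauto.
  - right. assert (In y l) as Hin.
    { assert (In y (x :: l)) by (eapply Permutation_in; [apply Permutation_sym; eauto|left; auto]).
      destruct H0; auto; congruence. }
    apply in_perm in Hin as [l'' Hl]. exists l''. split; auto.
    assert (Permutation (y :: l') (y :: x :: l'')).
    { eapply Permutation_trans; [apply Permutation_sym; eauto|]. psolve. }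
    eapply Permutation_cons_inv; eauto.
Qed.
Record TClosed (T : nat -> list form -> form -> Prop) : Prop := {
  Tperm : forall n G G' c, T n G c -> Permutation G G' -> T n G' c;
  TBot : forall n G c, In Bot G -> T (S n) G c;
  TId : forall n G p, In (Var p) G -> T (S n) G (Var p);
  TAndL : forall n G G0 a b c, Permutation G (And a b :: G0) -> T n (a :: b :: G0) c -> T (S n) G c;
  TAndR : forall n G a b, T n G a -> T n G b -> T (S n) G (And a b);
  TOrL : forall n G G0 a b c, Permutation G (Or a b :: G0) -> T n (a :: G0) c -> T n (b :: G0) c -> T (S n) G c;
  TOrR1 : forall n G a b, T n G a -> T (S n) G (Or a b);
  TOrR2 : forall n G a b, T n G b -> T (S n) G (Or a b);
  TPImpL : forall n G G0 p a c, Permutation G (Var p :: Imp (Var p) a :: G0) -> T n (Var p :: a :: G0) c -> T (S n) G c;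
  TImpR : forall n G a b, T n (a :: G) b -> T (S n) G (Imp a b);
  TBoxImpL : forall n G G0 a b c, Permutation G (Imp (Box a) b :: G0) ->
    T n (b :: Box a :: map unbox G0) a -> T n (b :: G0) c -> T (S n) G c;
  TSLtR : forall n G a, T n (Box a :: map unbox G) a -> T (S n) G (Box a);
  TAndImpL : forall n G G0 a b c d, Permutation G (Imp (And a b) c :: G0) -> T n (Imp a (Imp b c) :: G0) d -> T (S n) G d;
  TOrImpL : forall n G G0 a b c d, Permutation G (Imp (Or a b) c :: G0) -> T n (Imp a c :: Imp b c :: G0) d -> T (S n) G d;
  TImpImpL : forall n G G0 a b c d, Permutation G (Imp (Imp a b) c :: G0) ->
    T n (Imp b c :: G0) (Imp a b) -> T n (c :: G0) d -> T (S n) G d }.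

Lemma D_closed : TClosed D.
Proof. constructor; intros; try (econstructor; eauto; fail). eapply D_perm; eauto. Qed.

Definition PT (n : nat) G c := Prov G c.
Lemma P_closed : TClosed PT.
Proof. unfold PT; constructor; intros.
  eapply Prov_perm; eauto. apply PBot; auto. apply PId; auto. eapply PAndL; eauto. apply PAndR; auto.
  eapply POrL; eauto. apply POrR1; auto. apply POrR2; auto. eapply PPImpL; eauto. apply PImpR; auto.
  eapply PBoxImpL; eauto. apply PSLtR; auto. eapply PAndImpL; eauto. eapply POrImpL; eauto. eapply PImpImpL; eauto.
Qed.

Inductive Princ : form -> nat -> list form -> form -> Prop :=
| PrBot n G c : Princ Bot n G c
| PrId n G p : Princ (Var p) n G (Var p)
| PrAndL n G a b c : D n (a :: b :: G) c -> Princ (And a b) n G c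
| PrOrL n G a b c : D n (a :: G) c -> D n (b :: G) c -> Princ (Or a b) n G c
| PrP1 n G G0 p a c : Permutation G (Imp (Var p) a :: G0) -> D n (Var p :: a :: G0) c -> Princ (Var p) n G c
| PrP2 n G G0 p a c : Permutation G (Var p :: G0) -> D n (Var p :: a :: G0) c -> Princ (Imp (Var p) a) n G c
| PrAndImp n G a b c d : D n (Imp a (Imp b c) :: G) d -> Princ (Imp (And a b) c) n G d
| PrOrImp n G a b c d : D n (Imp a c :: Imp b c :: G) d -> Princ (Imp (Or a b) c) n G d
| PrImpImp n G a b c d : D n (Imp b c :: G) (Imp a b) -> D n (c :: G) d -> Princ (Imp (Imp a b) c) n G d
| PrBoxImp n G a b c : D n (b :: Box a :: map unbox G) a -> D n (b :: G) c -> Princ (Imp (Box a) b) n G c.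

Ltac dp := match goal with H : D _ _ _ |- D _ _ _ => eapply D_perm; [exact H|psolve] end.

Lemma gen T (TC : TClosed T) X Ys n
  (IH : forall Δ c, D n (X :: Δ) c -> T n (Ys ++ Δ) c)
  (IHu : forall Δ c, D n (unbox X :: Δ) c -> T n (map unbox Ys ++ Δ) c) :
  forall Γ c, D (S n) (X :: Γ) c -> Princ X n Γ c \/ T (S n) (Ys ++ Γ) c.
Proof.
  intros Γ c HD. inversion HD; subst.
  - destruct H0 as [HX|Hin]; [subst; left; constructor|right]. apply (TBot _ TC). apply in_or_app; auto.
  - destruct H0 as [HX|Hin]; [subst; left; constructor|right]. apply (TId _ TC). apply in_or_app; auto.
  - apply perm_cons_split in H0 as [[-> HP]|[l [K1 K2]]].
    + left. apply PrAndL. dp.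
    + right. apply (TAndL _ TC) with (G0 := Ys ++ l) (a:=a) (b:=b); [psolve|].
      eapply (Tperm _ TC); [apply (IH (a :: b :: l)); dp|]; psolve.
  - right. apply (TAndR _ TC); auto.
  - apply perm_cons_split in H0 as [[-> HP]|[l [K1 K2]]].
    + left. apply PrOrL; dp.
    + right. apply (TOrL _ TC) with (G0 := Ys ++ l) (a:=a) (b:=b); [psolve| |].
      * eapply (Tperm _ TC); [apply (IH (a :: l)); dp|]; psolve.
      * eapply (Tperm _ TC); [apply (IH (b :: l)); dp|]; psolve.
  - right. apply (TOrR1 _ TC); auto.
  - right. apply (TOrR2 _ TC); auto.
  - apply perm_cons_split in H0 as [[-> HP]|[l [K1 K2]]].
    + left. eapply PrP1; eauto.
    + apply perm_cons_split in K2 as [[<- HP]|[l2 [K3 K4]]].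
      * left. eapply PrP2 with (G0 := l); eauto. dp.
      * right. apply (TPImpL _ TC) with (G0 := Ys ++ l2) (p:=p) (a:=a); [psolve|].
        eapply (Tperm _ TC); [apply (IH (Var p :: a :: l2)); dp|]; psolve.
  - right. apply (TImpR _ TC). eapply (Tperm _ TC); [apply (IH (a :: Γ)); dp|]; psolve.
  - apply perm_cons_split in H0 as [[-> HP]|[l [K1 K2]]].
    + left. apply PrBoxImp; eapply D_perm; eauto. pose proof (perm_map_unbox _ _ HP). psolve. psolve.
    + right. pose proof (perm_map_unbox _ _ K2) as K3. simpl in K3.
      apply (TBoxImpL _ TC) with (G0 := Ys ++ l) (a:=a) (b:=b); [psolve| |].
      * eapply (Tperm _ TC); [apply (IHu (b :: Box a :: map unbox l)); dp|]; psolve.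
      * eapply (Tperm _ TC); [apply (IH (b :: l)); dp|]; psolve.
  - right. apply (TSLtR _ TC). eapply (Tperm _ TC); [apply (IHu (Box a :: map unbox Γ)); dp|]; simpl; psolve.
  - apply perm_cons_split in H0 as [[-> HP]|[l [K1 K2]]].
    + left. apply PrAndImp. dp.
    + right. apply (TAndImpL _ TC) with (G0 := Ys ++ l) (a:=a) (b:=b) (c:=c0); [psolve|].
      eapply (Tperm _ TC); [apply (IH (Imp a (Imp b c0) :: l)); dp|]; psolve.
  - apply perm_cons_split in H0 as [[-> HP]|[l [K1 K2]]].
    + left. apply PrOrImp. dp.
    + right. apply (TOrImpL _ TC) with (G0 := Ys ++ l) (a:=a) (b:=b) (c:=c0); [psolve|].
      eapply (Tperm _ TC); [apply (IH (Imp a c0 :: Imp b c0 :: l)); dp|]; psolve.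
  - apply perm_cons_split in H0 as [[-> HP]|[l [K1 K2]]].
    + left. apply PrImpImp; dp.
    + right. apply (TImpImpL _ TC) with (G0 := Ys ++ l) (a:=a) (b:=b) (c:=c0); [psolve| |].
      * eapply (Tperm _ TC); [apply (IH (Imp b c0 :: l)); dp|]; psolve.
      * eapply (Tperm _ TC); [apply (IH (c0 :: l)); dp|]; psolve.
Qed.
Lemma D_zero G c : D 0 G c -> False.
Proof. intros H; inversion H. Qed.

Lemma D_unbox_box n : forall a Δ c, D n (Box a :: Δ) c -> D n (a :: Δ) c.
Proof.
  induction n as [|n IHn]; intros a Δ c H; [exfalso; eapply D_zero; eauto|].
  destruct (gen D D_closed (Box a) [a] n (fun Δ c H => IHn a Δ c H)
     (fun Δ c H => ltac:(destruct a; simpl in *; auto)) Δ c H) as [HP|HP]; auto.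
  inversion HP.
Qed.

Lemma D_unbox n x Δ c : D n (x :: Δ) c -> D n (unbox x :: Δ) c.
Proof. destruct x; simpl; auto. apply D_unbox_box. Qed.

Lemma D_unbox2 n x y Δ c : D n (x :: y :: Δ) c -> D n (unbox x :: unbox y :: Δ) c.
Proof. intros H. apply D_unbox in H. eapply D_perm in H; [|apply perm_swap].
  apply D_unbox in H. eapply D_perm; [exact H|apply perm_swap]. Qed.

Lemma D_AndL_inv n : forall a b Δ c, D n (And a b :: Δ) c -> D n (a :: b :: Δ) c.
Proof.
  induction n as [|n IHn]; intros a b Δ c H; [exfalso; eapply D_zero; eauto|].
  destruct (gen D D_closed (And a b) [a; b] n (fun Δ c H => IHn a b Δ c H)
     (fun Δ c H => ltac:(simpl in *; apply D_unbox2; apply IHn; exact H)) Δ c H) as [HP|HP]; auto.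
  inversion HP; subst. eapply D_mono; eauto.
Qed.

Lemma D_OrL_inv1 n : forall a b Δ c, D n (Or a b :: Δ) c -> D n (a :: Δ) c.
Proof.
  induction n as [|n IHn]; intros a b Δ c H; [exfalso; eapply D_zero; eauto|].
  destruct (gen D D_closed (Or a b) [a] n (fun Δ c H => IHn a b Δ c H)
     (fun Δ c H => ltac:(simpl in *; apply D_unbox; apply IHn in H; exact H)) Δ c H) as [HP|HP]; auto.
  inversion HP; subst. eapply D_mono; eauto.
Qed.

Lemma D_OrL_inv2 n : forall a b Δ c, D n (Or a b :: Δ) c -> D n (b :: Δ) c.
Proof.
  induction n as [|n IHn]; intros a b Δ c H; [exfalso; eapply D_zero; eauto|].
  destruct (gen D D_closed (Or a b) [b] n (fun Δ c H => IHn a b Δ c H)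
     (fun Δ c H => ltac:(simpl in *; apply D_unbox; apply IHn in H; exact H)) Δ c H) as [HP|HP]; auto.
  inversion HP; subst. eapply D_mono; eauto.
Qed.

Lemma D_AndImp_inv n : forall a b e Δ c, D n (Imp (And a b) e :: Δ) c -> D n (Imp a (Imp b e) :: Δ) c.
Proof.
  induction n as [|n IHn]; intros a b e Δ c H; [exfalso; eapply D_zero; eauto|].
  destruct (gen D D_closed (Imp (And a b) e) [Imp a (Imp b e)] n (fun Δ c H => IHn a b e Δ c H)
     (fun Δ c H => IHn a b e Δ c H) Δ c H) as [HP|HP]; auto.
  inversion HP; subst. eapply D_mono; eauto.
Qed.

Lemma D_OrImp_inv n : forall a b e Δ c, D n (Imp (Or a b) e :: Δ) c -> D n (Imp a e :: Imp b e :: Δ) c.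
Proof.
  induction n as [|n IHn]; intros a b e Δ c H; [exfalso; eapply D_zero; eauto|].
  destruct (gen D D_closed (Imp (Or a b) e) [Imp a e; Imp b e] n (fun Δ c H => IHn a b e Δ c H)
     (fun Δ c H => IHn a b e Δ c H) Δ c H) as [HP|HP]; auto.
  inversion HP; subst. eapply D_mono; eauto.
Qed.

Lemma Prov_unbox x Δ c : Prov (x :: Δ) c -> Prov (unbox x :: Δ) c.
Proof. intros [n H]; exists n; apply D_unbox; auto. Qed.
Lemma Prov_AndL_inv a b Δ c : Prov (And a b :: Δ) c -> Prov (a :: b :: Δ) c.
Proof. intros [n H]; exists n; apply D_AndL_inv; auto. Qed.
Lemma Prov_OrL_inv1 a b Δ c : Prov (Or a b :: Δ) c -> Prov (a :: Δ) c.
Proof. intros [n H]; exists n; eapply D_OrL_inv1; eauto. Qed.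
Lemma Prov_OrL_inv2 a b Δ c : Prov (Or a b :: Δ) c -> Prov (b :: Δ) c.
Proof. intros [n H]; exists n; eapply D_OrL_inv2; eauto. Qed.
Lemma Prov_AndImp_inv a b e Δ c : Prov (Imp (And a b) e :: Δ) c -> Prov (Imp a (Imp b e) :: Δ) c.
Proof. intros [n H]; exists n; apply D_AndImp_inv; auto. Qed.
Lemma Prov_OrImp_inv a b e Δ c : Prov (Imp (Or a b) e :: Δ) c -> Prov (Imp a e :: Imp b e :: Δ) c.
Proof. intros [n H]; exists n; apply D_OrImp_inv; auto. Qed.
Definition freeant (a : form) : Prop :=
  match a with Var _ | Imp _ _ | Box _ => True | _ => False end.

Lemma D_dfree n : forall a b Δ c, freeant a -> D n (Imp a b :: Δ) c -> D n (b :: Δ) c.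
Proof.
  induction n as [|n IHn]; intros a b Δ c Ha H; [exfalso; eapply D_zero; eauto|].
  destruct (gen D D_closed (Imp a b) [b] n (fun Δ c H => IHn a b Δ c Ha H)
     (fun Δ c H => ltac:(simpl in *; apply D_unbox; eapply IHn; eauto)) Δ c H) as [HP|HP]; auto.
  inversion HP; subst; simpl in Ha; try contradiction; eapply D_mono; try (eapply D_perm; [eassumption|]); eauto.
  psolve.
Qed.

Lemma Prov_dfree a b Δ c : freeant a -> Prov (Imp a b :: Δ) c -> Prov (b :: Δ) c.
Proof. intros Ha [n H]; exists n; eapply D_dfree; eauto. Qed.

Fixpoint wt (f : form) : nat :=
  match f with Var _ => 1 | Bot => 1 | And a b => wt a + wt b + 2 | Or a b => wt a + wt b + 1
  | Imp a b => wt a + wt b + 1 | Box a => wt a + 1 end.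

Lemma wt_pos f : 1 <= wt f.
Proof. destruct f; simpl; lia. Qed.

Lemma wt_unbox f : wt (unbox f) <= wt f.
Proof. destruct f; simpl; lia. Qed.

Definition CP (φ : form) := forall n G c, D n (φ :: φ :: G) c -> Prov (φ :: G) c.
Definition dP (a b : form) := forall n G c, D n (Imp a b :: G) c -> Prov (b :: G) c.
Definition LmP (a b e : form) := forall n G c, D n (Imp (Imp a b) e :: G) c -> Prov (a :: Imp b e :: G) c.

Lemma CP_Prov φ G c : CP φ -> Prov (φ :: φ :: G) c -> Prov (φ :: G) c.
Proof. intros H [n Hn]. eapply H; eauto. Qed.
Lemma dP_Prov a b G c : dP a b -> Prov (Imp a b :: G) c -> Prov (b :: G) c.
Proof. intros H [n Hn]. eapply H; eauto. Qed.

Lemma perm_split2 (φ P : form) G G0 : Permutation (φ :: φ :: G) (P :: G0) ->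
  (P = φ /\ Permutation G0 (φ :: G)) \/ (exists l, Permutation G (P :: l) /\ Permutation G0 (φ :: φ :: l)).
Proof.
  intros H. apply perm_cons_split in H as [[-> HP]|[l [H1 H2]]].
  - left; split; auto. apply Permutation_sym; auto.
  - apply perm_cons_split in H1 as [[-> HP]|[l2 [H3 H4]]].
    + left; split; auto. psolve.
    + right. exists l2. split; auto. psolve.
Qed.

Lemma Prov_perm_in G c G' : Permutation G' G -> Prov G c -> Prov G' c.
Proof. intros; eapply Prov_perm; eauto. apply Permutation_sym; auto. Qed.
Lemma dP_step a b : (forall φ, wt φ < wt (Imp a b) -> CP φ) ->
  (forall a' b', wt (Imp a' b') < wt (Imp a b) -> dP a' b') -> dP a b.
Proof.
  intros HC Hd n. induction n as [|n IHn]; intros Δ c H; [exfalso; eapply D_zero; eauto|].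
  destruct (gen PT P_closed (Imp a b) [b] n (fun Δ c H => IHn Δ c H)
     (fun Δ c H => ltac:(simpl in *; apply Prov_unbox; eapply IHn; eauto)) Δ c H) as [HP|HP]; auto.
  inversion HP; subst.
  - exists n. eapply D_perm; eauto. psolve.
  - apply (dP_Prov b0 b); [apply Hd; simpl in *; lia|].
    apply (dP_Prov a0 (Imp b0 b)); [apply Hd; simpl in *; lia|]. exists n; auto.
  - apply (CP_Prov b Δ c (HC b ltac:(simpl; lia))).
    apply (dP_Prov b0 b (b :: Δ)); [apply Hd; simpl; lia|].
    apply Prov_perm_in with (b :: Imp b0 b :: Δ); [psolve|].
    apply (dP_Prov a0 b (Imp b0 b :: Δ)); [apply Hd; simpl; lia|]. exists n; auto.
  - exists n; auto.
  - exists n; auto.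
Qed.
Inductive avail (Ctx : list form) : form -> Prop :=
| av_in x : In x Ctx -> avail Ctx x
| av_and a b : avail Ctx a -> avail Ctx b -> avail Ctx (And a b)
| av_or1 a b : avail Ctx a -> avail Ctx (Or a b)
| av_or2 a b : avail Ctx b -> avail Ctx (Or a b)
| av_imp a b : avail Ctx b -> avail Ctx (Imp a b)
| av_andimp c d e : avail Ctx (Imp c (Imp d e)) -> avail Ctx (Imp (And c d) e)
| av_orimp c d e : avail Ctx (Imp c e) -> avail Ctx (Imp d e) -> avail Ctx (Imp (Or c d) e).

Inductive cov (Ctx : list form) : form -> form -> Prop :=
| cv_av K G : avail Ctx K -> cov Ctx K G
| cv_avimp K G : avail Ctx (Imp G K) -> cov Ctx K G
| cv_or K g1 g2 : cov Ctx K g1 -> cov Ctx K g2 -> cov Ctx K (Or g1 g2)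
| cv_and K g1 g2 : cov Ctx (Imp g2 K) g1 -> cov Ctx K (And g1 g2).

Lemma avail_tr Ctx Ctx2 : (forall y, In y Ctx -> avail Ctx2 y) -> forall x, avail Ctx x -> avail Ctx2 x.
Proof. intros H x Hx; induction Hx; try (econstructor; eauto; fail); auto. Qed.

Lemma cov_tr Ctx Ctx2 : (forall y, In y Ctx -> avail Ctx2 y) -> forall K G, cov Ctx K G -> cov Ctx2 K G.
Proof. intros H K G Hc; induction Hc.
  - apply cv_av; eapply avail_tr; eauto.
  - apply cv_avimp; eapply avail_tr; eauto.
  - apply cv_or; auto.
  - apply cv_and; auto.
Qed.

Lemma tr_cons Ctx P G0 Ctx2 : Permutation Ctx (P :: G0) -> avail Ctx2 P ->
  (forall y, In y G0 -> In y Ctx2) -> forall y, In y Ctx -> avail Ctx2 y.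
Proof.
  intros HP HA HG y Hy. eapply Permutation_in in Hy; [|exact HP].
  destruct Hy as [<-|Hy]; auto. apply av_in; auto.
Qed.

Lemma cov_norm Ctx K G : cov Ctx K G -> avail Ctx K \/ In (Imp G K) Ctx \/
  (exists g1 g2, G = Or g1 g2 /\ cov Ctx K g1 /\ cov Ctx K g2) \/
  (exists g1 g2, G = And g1 g2 /\ cov Ctx (Imp g2 K) g1).
Proof.
  intros Hc; induction Hc; auto.
  - inversion H; subst; auto.
    + right; right; right. do 2 eexists; split; eauto. apply cv_avimp; auto.
    + right; right; left. do 2 eexists; split; eauto. split; apply cv_avimp; auto.
  - right; right; left. eauto.
  - right; right; right. eauto.
Qed.

Lemma cash Ctx W : (forall φ, wt φ <= W -> CP φ) -> (forall a b, wt (Imp a b) <= W -> dP a b) ->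
  forall K, avail Ctx K -> wt K <= W -> forall F, Prov (K :: Ctx) F -> Prov Ctx F.
Proof.
  intros HC Hd K HK; induction HK; intros Hw F HF; simpl in Hw.
  - apply in_perm in H as [l Hl].
    apply Prov_perm_in with (x :: l); auto.
    apply (CP_Prov x l F (HC x Hw)). eapply Prov_perm; [exact HF|psolve].
  - apply Prov_AndL_inv in HF.
    apply IHHK2; [lia|]. apply Prov_ImpR_inv. apply IHHK1; [lia|].
    apply PImpR. eapply Prov_perm; [exact HF|psolve].
  - apply Prov_OrL_inv1 in HF. apply IHHK; [lia|auto].
  - apply Prov_OrL_inv2 in HF. apply IHHK; [lia|auto].
  - apply (dP_Prov a b) in HF; [|apply Hd; simpl; lia]. apply IHHK; [lia|auto].
  - apply Prov_AndImp_inv in HF. apply IHHK; [simpl; lia|auto].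
  - apply Prov_OrImp_inv in HF.
    apply IHHK2; [simpl; lia|]. apply Prov_ImpR_inv. apply IHHK1; [simpl; lia|].
    apply PImpR. eapply Prov_perm; [exact HF|psolve].
Qed.
Definition LAGP W := forall n Ctx G K F, wt (Imp G K) <= W -> D n Ctx G -> cov Ctx K G ->
  Prov (K :: Ctx) F -> Prov Ctx F.

Lemma Lm_step a b e : LAGP (wt (Imp b e)) -> LmP a b e.
Proof.
  intros HL n. induction n as [|n IHn]; intros Δ c H; [exfalso; eapply D_zero; eauto|].
  destruct (gen PT P_closed (Imp (Imp a b) e) [a; Imp b e] n (fun Δ c H => IHn Δ c H)
     (fun Δ c H => ltac:(simpl in *; apply Prov_unbox; eapply IHn; eauto)) Δ c H) as [HP|HP]; auto.
  inversion HP; subst.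
  apply (HL n (a :: Imp b e :: Δ) b e c); auto.
  - eapply D_ImpR_inv; eauto.
  - apply cv_avimp. apply av_in. right; left; auto.
  - exists n. match goal with HH : D n (e :: Δ) c |- _ => eapply D_perm; [apply (D_weak _ _ _ (D_weak _ _ _ HH a) (Imp b e))|psolve] end.
Qed.
Lemma Sig_mv K Ctx P G0 F : Prov (K :: Ctx) F -> Permutation Ctx (P :: G0) -> Prov (P :: K :: G0) F.
Proof. intros H HP. eapply Prov_perm; [exact H|psolve]. Qed.

Lemma LAG_step W : (forall φ, wt φ < W -> CP φ) -> (forall a b, wt (Imp a b) < W -> dP a b) ->
  (forall a b e, wt (Imp (Imp a b) e) <= W -> LmP a b e) -> LAGP W.
Proof.
  intros HC Hd HLm n. induction n as [|n IH]; intros Ctx G K F Hw HD Hc HS; [exfalso; eapply D_zero; eauto|].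
  assert (Hcash : avail Ctx K -> Prov Ctx F).
  { intros HA. apply (cash Ctx (wt K)) with K; auto.
    - intros φ Hφ. apply HC. simpl in Hw; lia.
    - intros a b Hab. apply Hd. simpl in *; lia. }
  assert (HwK : wt K < W) by (simpl in Hw; lia).
  inversion HD; subst.
  - apply PBot; auto.
  - destruct (cov_norm _ _ _ Hc) as [HA|[HI|[[g1 [g2 [Heq _]]]|[g1 [g2 [Heq _]]]]]]; try discriminate; auto.
    apply in_perm in HI as [l Hl].
    assert (In (Var p) l) as Hp.
    { eapply Permutation_in in H0; [|exact Hl]. destruct H0; [discriminate|auto]. }
    apply in_perm in Hp as [l2 Hl2].
    apply PPImpL with (G0 := l2) (p := p) (a := K); [psolve|].
    apply Prov_perm_in with (K :: Var p :: l2); [psolve|].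
    apply (CP_Prov K _ F (HC K HwK)).
    apply (Prov_dfree (Var p) K); [exact I|]. eapply Prov_perm; [exact HS|psolve].
  -
    apply PAndL with (G0 := G1) (a := a) (b := b); auto.
    apply (IH _ G K); auto.
    + eapply cov_tr; [|exact Hc]. eapply tr_cons; [exact H0| |].
      * apply av_and; apply av_in; simpl; auto.
      * intros; simpl; auto.
    + eapply Prov_perm; [apply Prov_AndL_inv; eapply Sig_mv; eauto|psolve].
  -
    assert (Hsub : forall C, wt (Imp (And a b) K) <= W -> D n C a -> D n C b -> cov C (Imp b K) a -> Prov (K :: C) F -> Prov C F).
    { intros C HwC Ha Hb HcC HSC. apply (IH C a (Imp b K) F); auto. simpl in *; lia.
      apply (IH (Imp b K :: C) b K F); auto.
      - simpl in *; lia.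
      - apply D_weak; auto.
      - apply cv_avimp. apply av_in. left; auto.
      - eapply Prov_perm; [apply Prov_weak with (x := Imp b K); exact HSC|psolve]. }
    destruct (cov_norm _ _ _ Hc) as [HA|[HI|[[g1 [g2 [Heq _]]]|[g1 [g2 [Heq Hc1]]]]]]; try discriminate; auto.
    + apply in_perm in HI as [l Hl].
      apply PAndImpL with (G0 := l) (a := a) (b := b) (c := K); [psolve|].
      apply Hsub; auto.
      * apply D_AndImp_inv. eapply D_perm; eauto.
      * apply D_AndImp_inv. eapply D_perm; eauto.
      * apply cv_avimp. apply av_in. left; auto.
      * eapply Prov_perm; [apply Prov_AndImp_inv; eapply Sig_mv; eauto|psolve].
    + injection Heq; intros; subst. apply Hsub; auto.
  -
    apply POrL with (G0 := G1) (a := a) (b := b); auto.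
    + apply (IH _ G K); auto.
      * eapply cov_tr; [|exact Hc]. eapply tr_cons; [exact H0| |].
        -- apply av_or1; apply av_in; simpl; auto.
        -- intros; simpl; auto.
      * eapply Prov_perm; [eapply Prov_OrL_inv1; eapply Sig_mv; eauto|psolve].
    + apply (IH _ G K); auto.
      * eapply cov_tr; [|exact Hc]. eapply tr_cons; [exact H0| |].
        -- apply av_or2; apply av_in; simpl; auto.
        -- intros; simpl; auto.
      * eapply Prov_perm; [eapply Prov_OrL_inv2; eapply Sig_mv; eauto|psolve].
  -
    destruct (cov_norm _ _ _ Hc) as [HA|[HI|[[g1 [g2 [Heq [Hc1 Hc2]]]]|[g1 [g2 [Heq _]]]]]]; try discriminate; auto.
    + apply in_perm in HI as [l Hl].
      apply POrImpL with (G0 := l) (a := a) (b := b) (c := K); [psolve|].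
      apply (IH _ a K); auto.
      * simpl in *; lia.
      * apply D_OrImp_inv. eapply D_perm; eauto.
      * apply cv_avimp. apply av_in. left; auto.
      * eapply Prov_perm; [apply Prov_OrImp_inv; eapply Sig_mv; eauto|psolve].
    + injection Heq; intros; subst. apply (IH _ g1 K); auto. simpl in *; lia.
  -
    destruct (cov_norm _ _ _ Hc) as [HA|[HI|[[g1 [g2 [Heq [Hc1 Hc2]]]]|[g1 [g2 [Heq _]]]]]]; try discriminate; auto.
    + apply in_perm in HI as [l Hl].
      apply POrImpL with (G0 := l) (a := a) (b := b) (c := K); [psolve|].
      apply (IH _ b K); auto.
      * simpl in *; lia.
      * apply D_OrImp_inv. eapply D_perm; eauto.
      * apply cv_avimp. apply av_in. right; left; auto.
      * eapply Prov_perm; [apply Prov_OrImp_inv; eapply Sig_mv; eauto|psolve].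
    + injection Heq; intros; subst. apply (IH _ g2 K); auto. simpl in *; lia.
  -
    apply PPImpL with (G0 := G1) (p := p) (a := a); auto.
    apply (IH _ G K); auto.
    + eapply cov_tr; [|exact Hc]. intros y Hy. eapply Permutation_in in Hy; [|exact H0].
      destruct Hy as [<-|[<-|Hy]].
      * apply av_in; left; auto.
      * apply av_imp; apply av_in; right; left; auto.
      * apply av_in; right; right; auto.
    + apply Prov_perm_in with (a :: K :: Var p :: G1); [psolve|].
      apply (Prov_dfree (Var p) a); [exact I|]. eapply Prov_perm; [exact HS|psolve].
  -
    destruct (cov_norm _ _ _ Hc) as [HA|[HI|[[g1 [g2 [Heq _]]]|[g1 [g2 [Heq _]]]]]]; try discriminate; auto.
    apply in_perm in HI as [l Hl].
    apply PImpImpL with (G0 := l) (a := a) (b := b) (c := K); [psolve| |].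
    + apply PImpR.
      apply Prov_perm_in with (a :: Imp b K :: l); [psolve|].
      apply (CP_Prov a _ _ (HC a ltac:(simpl in *; lia))).
      eapply Prov_perm; [apply (HLm a b K ltac:(simpl in *; lia) n (a :: l) b); eapply D_perm; [eassumption|psolve]|psolve].
    + apply (CP_Prov K _ F (HC K HwK)).
      apply (Prov_dfree (Imp a b) K); [exact I|]. eapply Prov_perm; [exact HS|psolve].
  -
    apply PBoxImpL with (G0 := G1) (a := a) (b := b); auto.
    + exists n; auto.
    + apply (IH _ G K); auto.
      * eapply cov_tr; [|exact Hc]. eapply tr_cons; [exact H0| |].
        -- apply av_imp; apply av_in; simpl; auto.
        -- intros; simpl; auto.
      * apply Prov_perm_in with (b :: K :: G1); [psolve|].
        apply (Prov_dfree (Box a) b); [exact I|]. eapply Prov_perm; [exact HS|psolve].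
  -
    destruct (cov_norm _ _ _ Hc) as [HA|[HI|[[g1 [g2 [Heq _]]]|[g1 [g2 [Heq _]]]]]]; try discriminate; auto.
    apply in_perm in HI as [l Hl].
    pose proof (perm_map_unbox _ _ Hl) as Hl'. simpl in Hl'.
    apply PBoxImpL with (G0 := l) (a := a) (b := K); [psolve| |].
    + exists n. eapply D_perm; [apply (D_dfree n (Box a) K (Box a :: map unbox l) a I); eapply D_perm; [eassumption|psolve]|psolve].
    + apply (CP_Prov K _ F (HC K HwK)).
      apply (Prov_dfree (Box a) K); [exact I|]. eapply Prov_perm; [exact HS|psolve].
  -
    apply PAndImpL with (G0 := G1) (a := a) (b := b) (c := c); auto.
    apply (IH _ G K); auto.
    + eapply cov_tr; [|exact Hc]. eapply tr_cons; [exact H0| |].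
      * apply av_andimp; apply av_in; simpl; auto.
      * intros; simpl; auto.
    + eapply Prov_perm; [apply Prov_AndImp_inv; eapply Sig_mv; eauto|psolve].
  -
    apply POrImpL with (G0 := G1) (a := a) (b := b) (c := c); auto.
    apply (IH _ G K); auto.
    + eapply cov_tr; [|exact Hc]. eapply tr_cons; [exact H0| |].
      * apply av_orimp; apply av_in; simpl; auto.
      * intros; simpl; auto.
    + eapply Prov_perm; [apply Prov_OrImp_inv; eapply Sig_mv; eauto|psolve].
  -
    apply PImpImpL with (G0 := G1) (a := a) (b := b) (c := c); auto.
    + exists n; auto.
    + apply (IH _ G K); auto.
      * eapply cov_tr; [|exact Hc]. eapply tr_cons; [exact H0| |].
        -- apply av_imp; apply av_in; simpl; auto.
        -- intros; simpl; auto.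
      * apply Prov_perm_in with (c :: K :: G1); [psolve|].
        apply (Prov_dfree (Imp a b) c); [exact I|]. eapply Prov_perm; [exact HS|psolve].
Qed.
Lemma CPP x G c : (forall n G c, D n (x :: x :: G) c -> Prov (x :: G) c) -> Prov (x :: x :: G) c -> Prov (x :: G) c.
Proof. intros H [n Hn]. eapply H; eauto. Qed.

Lemma CP_step w : (forall φ, wt φ < w -> CP φ) ->
  (forall a b e, wt (Imp (Imp a b) e) <= w -> LmP a b e) -> forall φ, wt φ <= w -> CP φ.
Proof.
  intros HC HLm.
  assert (Main : forall n φ Gm ch, wt φ <= w -> D n (φ :: φ :: Gm) ch -> Prov (φ :: Gm) ch).
  2:{ intros φ Hφ n Gm ch H. eapply Main; eauto. }
  induction n as [|n IH]; intros φ Gm ch Hw HD; [exfalso; eapply D_zero; eauto|].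
  inversion HD; subst.
  - apply PBot. destruct H0 as [<-|H0]; [left; auto|]. exact H0.
  - apply PId. destruct H0 as [<-|H0]; [left; auto|]. exact H0.
  - apply perm_split2 in H0 as [[<- HP]|[l [K2 K3]]].
    + simpl in Hw.
      apply PAndL with (G0 := Gm) (a := a) (b := b); [auto|].
      apply Prov_perm_in with (b :: a :: Gm); [psolve|].
      apply (CP_Prov b); [apply HC; lia|].
      apply Prov_perm_in with (a :: b :: b :: Gm); [psolve|].
      apply (CP_Prov a); [apply HC; lia|].
      exists n. eapply D_perm; [apply (D_AndL_inv n a b (a :: b :: Gm)); eapply D_perm; [eassumption|psolve]|psolve].
    + apply PAndL with (G0 := φ :: l) (a := a) (b := b); [psolve|].
      eapply Prov_perm; [apply (IH φ (a :: b :: l) ch Hw); eapply D_perm; [eassumption|psolve]|psolve].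
  - apply PAndR; eauto.
  - apply perm_split2 in H0 as [[<- HP]|[l [K2 K3]]].
    + simpl in Hw.
      apply POrL with (G0 := Gm) (a := a) (b := b); [auto| |].
      * apply (CP_Prov a); [apply HC; lia|].
        exists n. apply (D_OrL_inv1 n a b (a :: Gm)). eapply D_perm; [exact H1|psolve].
      * apply (CP_Prov b); [apply HC; lia|].
        exists n. apply (D_OrL_inv2 n a b (b :: Gm)). eapply D_perm; [exact H2|psolve].
    + apply POrL with (G0 := φ :: l) (a := a) (b := b); [psolve| |].
      * eapply Prov_perm; [apply (IH φ (a :: l) ch Hw); eapply D_perm; [exact H1|psolve]|psolve].
      * eapply Prov_perm; [apply (IH φ (b :: l) ch Hw); eapply D_perm; [exact H2|psolve]|psolve].
  - apply POrR1; eauto.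
  - apply POrR2; eauto.
  - apply perm_split2 in H0 as [[<- HP]|[l [K2 K3]]].
    + apply perm_cons_split in HP as [[He _]|[l2 [K4 K5]]]; [discriminate|].
      apply PPImpL with (G0 := l2) (p := p) (a := a); [psolve|].
      apply (IH (Var p) (a :: l2) ch Hw). eapply D_perm; [eassumption|psolve].
    + apply Permutation_sym in K3. apply perm_split2 in K3 as [[<- HP]|[l2 [K4 K5]]].
      * simpl in Hw.
        apply PPImpL with (G0 := l) (p := p) (a := a); [psolve|].
        apply Prov_perm_in with (a :: Var p :: l); [psolve|].
        apply (CP_Prov a); [apply HC; lia|].
        exists n. eapply D_perm; [apply (D_dfree n (Var p) a (Var p :: a :: l)); [exact I|]; eapply D_perm; [eassumption|psolve]|psolve].
      * apply PPImpL with (G0 := φ :: l2) (p := p) (a := a); [psolve|].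
        eapply Prov_perm; [apply (IH φ (Var p :: a :: l2) ch Hw); eapply D_perm; [eassumption|psolve]|psolve].
  - apply PImpR.
    eapply Prov_perm; [apply (IH φ (a :: Gm) b Hw); eapply D_perm; [eassumption|psolve]|psolve].
  - apply perm_split2 in H0 as [[<- HP]|[l [K2 K3]]].
    + simpl in Hw. pose proof (perm_map_unbox _ _ HP) as HPu. simpl in HPu.
      apply PBoxImpL with (G0 := Gm) (a := a) (b := b); [auto| |].
      * apply (CP_Prov b); [apply HC; lia|].
        exists n. eapply D_perm; [apply (D_dfree n (Box a) b (b :: Box a :: map unbox Gm)); [exact I|]; eapply D_perm; [eassumption|psolve]|psolve].
      * apply (CP_Prov b); [apply HC; lia|].
        exists n. eapply D_perm; [apply (D_dfree n (Box a) b (b :: Gm)); [exact I|]; eapply D_perm; [eassumption|psolve]|psolve].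
    + pose proof (perm_map_unbox _ _ K3) as HPu. simpl in HPu.
      apply PBoxImpL with (G0 := φ :: l) (a := a) (b := b); [psolve| |].
      * eapply Prov_perm; [apply (IH (unbox φ) (b :: Box a :: map unbox l) a); [pose proof (wt_unbox φ); lia|]; eapply D_perm; [eassumption|psolve]|simpl; psolve].
      * eapply Prov_perm; [apply (IH φ (b :: l) ch Hw); eapply D_perm; [eassumption|psolve]|psolve].
  - apply PSLtR.
    eapply Prov_perm; [apply (IH (unbox φ) (Box a :: map unbox Gm) a); [pose proof (wt_unbox φ); lia|]; eapply D_perm; [eassumption|simpl; psolve]|simpl; psolve].
  - apply perm_split2 in H0 as [[<- HP]|[l [K2 K3]]].
    + simpl in Hw.
      apply PAndImpL with (G0 := Gm) (a := a) (b := b) (c := c); [auto|].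
      apply (CP_Prov (Imp a (Imp b c))); [apply HC; simpl; lia|].
      exists n. apply (D_AndImp_inv n a b c (Imp a (Imp b c) :: Gm)). eapply D_perm; [eassumption|psolve].
    + apply PAndImpL with (G0 := φ :: l) (a := a) (b := b) (c := c); [psolve|].
      eapply Prov_perm; [apply (IH φ (Imp a (Imp b c) :: l) ch Hw); eapply D_perm; [eassumption|psolve]|psolve].
  - apply perm_split2 in H0 as [[<- HP]|[l [K2 K3]]].
    + simpl in Hw.
      apply POrImpL with (G0 := Gm) (a := a) (b := b) (c := c); [auto|].
      apply Prov_perm_in with (Imp b c :: Imp a c :: Gm); [psolve|].
      apply (CP_Prov (Imp b c)); [apply HC; simpl; lia|].
      apply Prov_perm_in with (Imp a c :: Imp b c :: Imp b c :: Gm); [psolve|].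
      apply (CP_Prov (Imp a c)); [apply HC; simpl; lia|].
      exists n. eapply D_perm; [apply (D_OrImp_inv n a b c (Imp a c :: Imp b c :: Gm)); eapply D_perm; [eassumption|psolve]|psolve].
    + apply POrImpL with (G0 := φ :: l) (a := a) (b := b) (c := c); [psolve|].
      eapply Prov_perm; [apply (IH φ (Imp a c :: Imp b c :: l) ch Hw); eapply D_perm; [eassumption|psolve]|psolve].
  - apply perm_split2 in H0 as [[<- HP]|[l [K2 K3]]].
    + simpl in Hw.
      apply PImpImpL with (G0 := Gm) (a := a) (b := b) (c := c); [auto| |].
      * apply PImpR.
        apply Prov_perm_in with (Imp b c :: a :: Gm); [psolve|].
        apply (CP_Prov (Imp b c)); [apply HC; simpl; lia|].
        apply Prov_perm_in with (a :: Imp b c :: Imp b c :: Gm); [psolve|].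
        apply (CP_Prov a); [apply HC; simpl; lia|].
        apply Prov_ImpR_inv.
        apply (HLm a b c ltac:(simpl; lia) n (Imp b c :: Gm) (Imp a b)).
        eapply D_perm; [eassumption|psolve].
      * apply (CP_Prov c); [apply HC; lia|].
        exists n. eapply D_perm; [apply (D_dfree n (Imp a b) c (c :: Gm)); [exact I|]; eapply D_perm; [eassumption|psolve]|psolve].
    + apply PImpImpL with (G0 := φ :: l) (a := a) (b := b) (c := c); [psolve| |].
      * eapply Prov_perm; [apply (IH φ (Imp b c :: l) (Imp a b) Hw); eapply D_perm; [eassumption|psolve]|psolve].
      * eapply Prov_perm; [apply (IH φ (c :: l) ch Hw); eapply D_perm; [eassumption|psolve]|psolve].
Qed.
Definition Good w := (forall φ, wt φ < w -> CP φ) /\ (forall a b, wt (Imp a b) < w -> dP a b) /\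
  (forall a b e, wt (Imp (Imp a b) e) < w -> LmP a b e) /\ (forall W, W < w -> LAGP W).

Lemma Good_all w : Good w.
Proof.
  induction w as [|w [HC [Hd [HL HA]]]].
  - repeat split; intros; lia.
  - assert (Hd' : forall a b, wt (Imp a b) < S w -> dP a b).
    { intros a b Hab. apply dP_step.
      - intros φ Hφ; apply HC; lia.
      - intros a' b' H'; apply Hd; lia. }
    assert (HL' : forall a b e, wt (Imp (Imp a b) e) < S w -> LmP a b e).
    { intros a b e H. apply Lm_step. apply HA. simpl in *; lia. }
    assert (HA' : LAGP w).
    { apply LAG_step; auto. intros a b e H; apply HL'; lia. }
    assert (HC' : forall φ, wt φ < S w -> CP φ).
    { intros φ Hφ. apply (CP_step w); auto.
      - intros a b e H; apply HL'; lia.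
      - lia. }
    repeat split; auto.
    intros W HW. destruct (Nat.eq_dec W w) as [->|Hne]; auto. apply HA; lia.
Qed.

Lemma contraction φ G c : Prov (φ :: φ :: G) c -> Prov (φ :: G) c.
Proof.
  destruct (Good_all (S (wt φ))) as [HC _].
  intros [n H]. apply (HC φ ltac:(lia) n G c H).
Qed.

Theorem mainTheorem13 :
  forall (Gam : list form) (phi chi : form),
    G4iSLt (phi :: phi :: Gam) chi -> G4iSLt (phi :: Gam) chi.
Proof.
  intros Gam phi chi H. apply G4_D in H. apply contraction in H.
  destruct H as [n H]. eapply D_G4; eauto.
Qed.
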